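(* Let $N\ge 2$ and $1\le \tilde N\le N-1$ be integers, and consider the value functions $V_n^{\tilde N}$, $n\in\{0,\dots,N\}$, and the minimizers $\mu_n$ defined in the context. Suppose there exists $\beta>0$ such that, for all $x\in\mathcal{X}$, $$V_{\tilde N+1}^{\tilde N}(x)\le (\beta+1)\,V_{\tilde N}^{\tilde N}(x)\qquad\text{and}\qquad V_n^{\tilde N}(x)\le (\beta+1)\,l(x,\mu_n(x))\ \text{ for all } n\in\{\tilde N+1,\dots,N\}.$$ Then for all $x\in\mathcal{X}$, $$\frac{(\beta+1)^{N-\tilde N-1}}{(\beta+1)^{N-\tilde N-1}+\beta^{N-\tilde N}}\;V_N^{\tilde N}(x)\;\le\; V_{N-1}^{\tilde N}(x).$$
   Context: Let $\mathcal{D}\subset\mathbb{R}^n$ and $\mathcal{U}\subset\mathbb{R}^m$ be compact, and let $f:\mathcal{D}\times\mathcal{U}\to\mathcal{D}$ define the discrete-time system $x(k+1)=f(x(k),u(k))$, with $f(0,0)=0$. The stage cost $l:\mathcal{D}\times\mathcal{U}\to[0,\infty)$ is positive definite with $l(0,0)=0$. The set $\mathcal{X}\subseteq\mathcal{D}$ is control invariant: for every $x\in\mathcal{X}$ there is $u\in\mathcal{U}$ with $f(x,u)\in\mathcal{X}$. For $x\in\mathcal{X}$ write $\mathcal{U}(x)=\{u\in\mathcal{U}: f(x,u)\in\mathcal{X}\}$. Fix integers $N$ and $\tilde N$ with $0\le\tilde N\le N-1$. Define value functions on $\mathcal{X}$ recursively (dynamic programming form of the MPC problem with prediction horizon $N$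 in which the state constraint $x\in\mathcal{X}$ is imposed only during the first $N-\tilde N$ steps, the last $\tilde N$ steps being unconstrained): - $V_0^{\tilde N}\equiv 0$. - For $n\in\{1,\dots,\tilde N\}$: $V_n^{\tilde N}(x)=\min_{u\in\mathcal{U}}\big[V_{n-1}^{\tilde N}(f(x,u))+l(x,u)\big]$, with $\mu_n(x)$ a minimizer. - For $n\in\{\tilde N+1,\dots,N\}$: $V_n^{\tilde N}(x)=\min_{u\in\mathcal{U}(x)}\big[V_{n-1}^{\tilde N}(f(x,u))+l(x,u)\big]$, with $\mu_n(x)$ a minimizer; in particular $f(x,\mu_n(x))\in\mathcal{X}$. Equivalently, $V_n^{\tilde N}(x)$ is the minimal $n$-step cost $\sum_{i=0}^{n-1}l(x_i,u_i)$ over $u_i\in\mathcal{U}$, with $x_0=x$, $x_{i+1}=f(x_i,u_i)$, subject to the state constraints on the early steps of the horizon. All minima are assumed to be attained. *)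

(* Defs.v *)
From HB Require Import structures.
From mathcomp Require Import all_boot all_order all_algebra.
From mathcomp Require Import all_classical all_reals topology normedtype matrix_topology matrix_normedtype.
Set Implicit Arguments. Unset Strict Implicit. Unset Printing Implicit Defensive.
Import Order.TTheory GRing.Theory Num.Theory numFieldNormedType.Exports.
Local Open Scope ring_scope.
Local Open Scope classical_set_scope.

Definition mpc_setting (R : realType) (n m : nat)
  (D : set 'rV[R]_n) (U : set 'rV[R]_m) (X : set 'rV[R]_n)
  (f : 'rV[R]_n -> 'rV[R]_m -> 'rV[R]_n) (l : 'rV[R]_n -> 'rV[R]_m -> R) : Prop :=
  [/\ compact D /\ compact U,
      (forall x u, D x -> U u -> D (f x u)) /\ [/\ D 0, U 0 & f 0 0 = 0],
      (forall x u, D x -> U u -> 0 <= l x u),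
      (l 0 0 = 0 /\ (forall x u, D x -> U u -> (x, u) <> (0, 0) -> 0 < l x u)) &
      (X `<=` D /\ (forall x, X x -> exists2 u, U u & X (f x u)))].

(* V n = V_n^{Nt} and mu n = mu_n are value functions / minimizers of the
   dynamic-programming recursion in which the state constraint x ∈ X is
   imposed only in the stages n ∈ {Nt+1, …, N}. *)
Definition value_functions (R : realType) (n m : nat)
  (D : set 'rV[R]_n) (U : set 'rV[R]_m) (X : set 'rV[R]_n)
  (f : 'rV[R]_n -> 'rV[R]_m -> 'rV[R]_n) (l : 'rV[R]_n -> 'rV[R]_m -> R)
  (N Nt : nat) (V : nat -> 'rV[R]_n -> R) (mu : nat -> 'rV[R]_n -> 'rV[R]_m)
  : Prop :=
  [/\ (forall x, D x -> V 0%N x = 0),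
      (forall k x, (1 <= k <= Nt)%N -> D x ->
         [/\ U (mu k x),
         V k x = V k.-1 (f x (mu k x)) + l x (mu k x) &
         (forall u, U u -> V k x <= V k.-1 (f x u) + l x u)]) &
      (forall k x, (Nt < k <= N)%N -> X x ->
         [/\ U (mu k x), X (f x (mu k x)),
         V k x = V k.-1 (f x (mu k x)) + l x (mu k x) &
         (forall u, U u -> X (f x u) -> V k x <= V k.-1 (f x u) + l x u)])].

(* Main.v *)
Require Import Defs.
From HB Require Import structures.
From mathcomp Require Import all_boot all_order all_algebra.
From mathcomp Require Import all_classical all_reals topology normedtype matrix_topology matrix_normedtype.
From mathcomp Require Import ring lra zify.
From Stdlib Require Import Lia.
Import Order.TTheory GRing.Theory Num.Theory numFieldNormedType.Exports.
Local Open Scope ring_scope.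
Local Open Scope classical_set_scope.

Theorem lemma2 (R : realType) (n m : nat)
  (D : set 'rV[R]_n) (U : set 'rV[R]_m) (X : set 'rV[R]_n)
  (f : 'rV[R]_n -> 'rV[R]_m -> 'rV[R]_n) (l : 'rV[R]_n -> 'rV[R]_m -> R)
  (N Nt : nat) (V : nat -> 'rV[R]_n -> R) (mu : nat -> 'rV[R]_n -> 'rV[R]_m)
  (beta : R) :
  mpc_setting D U X f l ->
  (2 <= N)%N -> (1 <= Nt <= N - 1)%N ->
  value_functions D U X f l N Nt V mu ->
  0 < beta ->
  (forall x, X x -> V Nt.+1 x <= (beta + 1) * V Nt x) ->
  (forall x k, X x -> (Nt < k <= N)%N -> V k x <= (beta + 1) * l x (mu k x)) ->
  forall x, X x ->
    (beta + 1) ^+ (N - Nt - 1) / ((beta + 1) ^+ (N - Nt - 1) + beta ^+ (N - Nt))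
      * V N x <= V N.-1 x.
Proof.
move=> _ HN /andP[HNt1 HNt2] [_ _ H3] bpos HV1 HVl.
have gpos : 0 < beta + 1 by lra.
have key : forall j, (Nt + j.+1 <= N)%N -> forall x, X x ->
    V (Nt + j)%N.+1 x - V (Nt + j)%N x <= beta ^+ j.+1 / (beta + 1) ^+ j * V (Nt + j)%N x.
  elim=> [|j IH] Hj x Xx.
    rewrite expr0 divr1 expr1 addn0.
    have := HV1 x Xx; rewrite mulrDl mul1r; lra.
  have Hn : (Nt < (Nt + j).+1 <= N)%N by apply/andP; split; lia.
  have Hn1 : (Nt < (Nt + j.+1).+1 <= N)%N by apply/andP; split; lia.
  have [Uu Xu Eq _] := H3 _ x Hn Xx.
  rewrite -addnS.
  have [_ _ _ Hle] := H3 _ x Hn1 Xx.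
  have := Hle _ Uu; rewrite addnS /= => /(_ Xu) Hle2.
  have := IH ltac:(lia) _ Xu.
  have := HVl x _ Xx Hn.
  rewrite /= in Eq.
  set x' := f x (mu (Nt + j)%N.+1 x) in Eq Hle2 *.
  set lx := l x (mu (Nt + j)%N.+1 x) in Eq Hle2 *.
  set a := beta ^+ j.+1 / (beta + 1) ^+ j.
  move=> Hl HIH.
  have apos : 0 <= a by rewrite /a divr_ge0 // exprn_ge0 // ltW.
  have H1 : V (Nt + j)%N x' <= beta / (beta + 1) * V (Nt + j)%N.+1 x.
    rewrite -(ler_pM2l gpos) mulrA mulrCA divff ?mulr1; last by rewrite gt_eqF.
    nra.
  have E : beta ^+ j.+2 / (beta + 1) ^+ j.+1 = a * (beta / (beta + 1)).
    rewrite /a !exprS; field.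
    by rewrite !gt_eqF // exprn_gt0.
  rewrite E -mulrA.
  have := ler_wpM2l apos H1.
  rewrite !addnS; lra.
pose j := (N - Nt - 1)%N.
have Hj : (Nt + j.+1)%N = N by rewrite /j; lia.
have Hj' : (Nt + j)%N = N.-1 by rewrite /j; lia.
have HM : (N - Nt)%N = j.+1 by rewrite /j; lia.
move=> x Xx.
have := key j ltac:(lia) x Xx.
rewrite -addnS Hj Hj' HM subn1 succnK.
set c := (beta + 1) ^+ j.
set b := beta ^+ j.+1.
have cpos : 0 < c by rewrite exprn_gt0.
have bpos' : 0 < b by rewrite exprn_gt0.
move=> H.
rewrite mulrAC ler_pdivrMr; last lra.
have := ler_wpM2l (ltW cpos) H.
have -> : c * (b / c * V N.-1 x) = b * V N.-1 x by field; rewrite gt_eqF.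
have -> : V N.-1 x * (c + b) = c * V N.-1 x + b * V N.-1 x by ring.
rewrite mulrBr; lra.
Qed.
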